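(* For strictly positive formulas $A,B$: (i) $A\vdash_{\mathbf{RJ}}B$ iff $\mathrm{RJ}_S[A]\Vdash B$, where $S=\ell(A)$; (ii) $A\vdash_{\mathbf{RC}}B$ iff $\mathrm{RC}_S[A]\Vdash B$, where $S=\ell(\{A,B\})$. Here $\Vdash$ means truth at the root.
   Context: Strictly positive formulas: $A::= p\mid \top\mid (A\land B)\mid \alpha A$, $\alpha\le\omega$; $\ell(X)$ is the set of modalities occurring in formulas of $X$. $\mathbf{RJ}$: $A\vdash A$; $A\vdash\top$; cut; $A\land B\vdash A$; $A\land B\vdash B$; from $A\vdash B$, $A\vdash C$ infer $A\vdash B\land C$; from $A\vdash B$ infer $\alpha A\vdash\alpha B$; $\alpha\alpha A\vdash\alpha A$; $\alpha\beta A\vdash\beta A$, $\beta\alpha A\vdash\beta A$ for $\alpha\ge\beta$; $\alpha A\land\beta B\vdash\alpha(A\land\beta B)$ for $\alpha>\beta$. $\mathbf{RC}=\mathbf{RJ}+\{\alpha A\vdash\beta A:\alpha>\beta\}$. Kripke models of signature $S$: $W$, relations $(R_\alpha)_{\alpha\in S}$, valuation, usual forcing with $x\Vdash\alpha A$ iff $\exists y(xR_\alpha y\wedge y\Vdash A)$. RJ$_S$-frame: $R_\alpha R_\beta\subseteq R_{\min(\alpha,\beta)}$ for $\alpha,\beta\in S$, and for $\alpha>\beta$ in $S$, $xR_\alpha y\wedge xR_\beta z\Rightarrow yR_\beta z$. RC$_S$-frame: RJ$_S$-frame with $R_\alpha\subseteq R_\beta$ for $\beta<\alpha$. The canonical tree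 $T[A]$: for a variable or $\top$, one node with empty relations where only that variable is true; $T[B\land C]$: disjoint union of $T[B],T[C]$ with roots identified, a variable true at the root iff true at either root; $T[\alpha B]$: $T[B]$ plus a new root $r$ (all variables false) with $rR_\alpha$(root of $T[B]$). For $S\supseteq\ell(A)$, $\mathrm{RJ}_S[A]$ (resp. $\mathrm{RC}_S[A]$) is the model on the same set and valuation as $T[A]$ whose relations are the least relations containing those of $T[A]$ (relations for $\alpha\in S\setminus\ell(A)$ starting empty) forming an RJ$_S$-frame (resp. RC$_S$-frame). *)

(* Defs.v *)
From Stdlib Require Import Arith.

Inductive modal : Type := MFin (n : nat) | MOmega.

Definition mle (a b : modal) : Prop :=
  match a, b with
  | MFin n, MFin m => n <= m
  | _, MOmega => True
  | MOmega, MFin _ => False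
  end.

Definition mlt (a b : modal) : Prop := mle a b /\ a <> b.

Definition mmin (a b : modal) : modal :=
  match a, b with
  | MFin n, MFin m => MFin (Nat.min n m)
  | MOmega, _ => b
  | _, MOmega => a
  end.

Inductive form : Type :=
| FVar (p : nat)
| FTop
| FAnd (A B : form)
| FDia (a : modal) (A : form).

(* occ A a : the modality a occurs in A  (a \in l(A)). *)
Fixpoint occ (A : form) (a : modal) : Prop :=
  match A with
  | FVar _ | FTop => False
  | FAnd B C => occ B a \/ occ C a
  | FDia b B => a = b \/ occ B a
  end.

(* The calculi RJ (rc = false) and RC (rc = true). *)
Inductive prov (rc : bool) : form -> form -> Prop :=
| pr_refl A : prov rc A A
| pr_top A : prov rc A FTop
| pr_cut A B C : prov rc A B -> prov rc B C -> prov rc A C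
| pr_andl A B : prov rc (FAnd A B) A
| pr_andr A B : prov rc (FAnd A B) B
| pr_andI A B C : prov rc A B -> prov rc A C -> prov rc A (FAnd B C)
| pr_mono a A B : prov rc A B -> prov rc (FDia a A) (FDia a B)
| pr_four a A : prov rc (FDia a (FDia a A)) (FDia a A)
| pr_redl a b A : mle b a -> prov rc (FDia a (FDia b A)) (FDia b A)
| pr_redr a b A : mle b a -> prov rc (FDia b (FDia a A)) (FDia b A)
| pr_poly a b A B : mlt b a ->
    prov rc (FAnd (FDia a A) (FDia b B)) (FDia a (FAnd A (FDia b B)))
| pr_mon a b A : rc = true -> mlt b a -> prov rc (FDia a A) (FDia b A).

Definition RJ_prov := prov false.
Definition RC_prov := prov true.

(* Kripke forcing for a model (W, R, V); relations indexed by all modalities,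
   those outside the signature being empty. *)
Fixpoint forces {W : Type} (R : modal -> W -> W -> Prop) (V : W -> nat -> Prop)
  (x : W) (A : form) : Prop :=
  match A with
  | FVar p => V x p
  | FTop => True
  | FAnd B C => forces R V x B /\ forces R V x C
  | FDia a B => exists y, R a x y /\ forces R V y B
  end.

(* Canonical tree T[A].  Non-root nodes: *)
Fixpoint sub (A : form) : Type :=
  match A with
  | FVar _ | FTop => Empty_set
  | FAnd B C => (sub B + sub C)%type
  | FDia _ B => option (sub B)
  end.

(* Nodes of T[A]; None is the root. *)
Definition node (A : form) : Type := option (sub A).

Definition embL (B C : form) (x : node B) : node (FAnd B C) :=
  match x with None => None | Some s => Some (inl s) end.
Definition embR (B C : form) (x : node C) : node (FAnd B C) :=
  match x with None => None | Some s => Some (inr s) end.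

Fixpoint tedge (A : form) : modal -> node A -> node A -> Prop :=
  match A return modal -> node A -> node A -> Prop with
  | FVar _ | FTop => fun _ _ _ => False
  | FAnd B C => fun a x y =>
      (exists x' y', x = embL B C x' /\ y = embL B C y' /\ tedge B a x' y') \/
      (exists x' y', x = embR B C x' /\ y = embR B C y' /\ tedge C a x' y')
  | FDia b B => fun a x y =>
      (x = None /\ y = Some None /\ a = b) \/
      (exists x' y', x = Some x' /\ y = Some y' /\ tedge B a x' y')
  end.

Fixpoint tval (A : form) : node A -> nat -> Prop :=
  match A return node A -> nat -> Prop with
  | FVar p => fun _ q => q = p
  | FTop => fun _ _ => False
  | FAnd B C => fun x q =>
      match x with
      | None => tval B None q \/ tval C None q
      | Some (inl s) => tval B (Some s) q
      | Some (inr s) => tval C (Some s) q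
      end
  | FDia _ B => fun x q =>
      match x with
      | None => False
      | Some y => tval B y q
      end
  end.

Inductive RJrel (S : modal -> Prop) (A : form) : modal -> node A -> node A -> Prop :=
| rj_base a x y : tedge A a x y -> RJrel S A a x y
| rj_comp a b x y z : S a -> S b ->
    RJrel S A a x y -> RJrel S A b y z -> RJrel S A (mmin a b) x z
| rj_eucl a b x y z : S a -> S b -> mlt b a ->
    RJrel S A a x y -> RJrel S A b x z -> RJrel S A b y z.

Inductive RCrel (S : modal -> Prop) (A : form) : modal -> node A -> node A -> Prop :=
| rc_base a x y : tedge A a x y -> RCrel S A a x y
| rc_comp a b x y z : S a -> S b ->
    RCrel S A a x y -> RCrel S A b y z -> RCrel S A (mmin a b) x z
| rc_eucl a b x y z : S a -> S b -> mlt b a ->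
    RCrel S A a x y -> RCrel S A b x z -> RCrel S A b y z
| rc_mon a b x y : S a -> S b -> mlt b a ->
    RCrel S A a x y -> RCrel S A b x y.

Definition RJ_model_root_forces (S : modal -> Prop) (A B : form) : Prop :=
  @forces (node A) (RJrel S A) (tval A) None B.
Definition RC_model_root_forces (S : modal -> Prop) (A B : form) : Prop :=
  @forces (node A) (RCrel S A) (tval A) None B.

(* Main.v *)
Require Import Defs.
From Stdlib Require Import Arith Lia List Classical.
Import ListNotations.

Lemma mle_refl a : mle a a.
Proof. destruct a; simpl; auto. Qed.
Lemma mle_trans a b c : mle a b -> mle b c -> mle a c.
Proof. destruct a, b, c; simpl; intros; auto; try lia; contradiction. Qed.
Lemma mle_total a b : mle a b \/ mle b a.
Proof. destruct a, b; simpl; auto; lia. Qed.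
Lemma mle_antisym a b : mle a b -> mle b a -> a = b.
Proof. destruct a, b; simpl; intros; try contradiction; auto; f_equal; lia. Qed.
Lemma mmin_l a b : mle b a -> mmin a b = b.
Proof. destruct a, b; simpl; intros; try contradiction; auto; f_equal; lia. Qed.
Lemma mmin_r a b : mle a b -> mmin a b = a.
Proof. destruct a, b; simpl; intros; try contradiction; auto; f_equal; lia. Qed.
Lemma mmin_cases a b : mmin a b = a \/ mmin a b = b.
Proof. destruct (mle_total a b); [left; apply mmin_r|right; apply mmin_l]; auto. Qed.
Lemma mmin_id a : mmin a a = a.
Proof. apply mmin_r, mle_refl. Qed.
Lemma mmin_lb1 a b : mle (mmin a b) a.
Proof. destruct (mle_total a b) as [H|H];
  [rewrite mmin_r by exact H; apply mle_refl | rewrite mmin_l by exact H; exact H]. Qed.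
Lemma mmin_lb2 a b : mle (mmin a b) b.
Proof. destruct (mle_total a b) as [H|H];
  [rewrite mmin_r by exact H; exact H | rewrite mmin_l by exact H; apply mle_refl]. Qed.
Lemma mlt_le a b : mlt a b -> mle a b.
Proof. intros [H _]; exact H. Qed.
Lemma mlt_le_trans a b c : mlt a b -> mle b c -> mlt a c.
Proof. intros [H1 H2] H3; split; [eapply mle_trans; eauto|].
  intros ->; apply H2; apply mle_antisym; auto. Qed.
Lemma mle_lt_trans a b c : mle a b -> mlt b c -> mlt a c.
Proof. intros H1 [H2 H3]; split; [eapply mle_trans; eauto|].
  intros ->; apply H3; apply mle_antisym; auto. Qed.
Lemma mlt_trans a b c : mlt a b -> mlt b c -> mlt a c.
Proof. intros H1 H2; eapply mlt_le_trans; eauto; apply mlt_le; auto. Qed.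
Lemma mlt_irrefl a : ~ mlt a a.
Proof. intros [_ H]; auto. Qed.
Lemma mlt_or_ge a b : mlt a b \/ mle b a.
Proof. destruct (mle_total b a) as [H|H]; [right; auto|].
  destruct (classic (a = b)) as [->|Hn]; [right; apply mle_refl | left; split; auto]. Qed.
Lemma mlt_trich a b : mlt a b \/ a = b \/ mlt b a.
Proof. destruct (mlt_or_ge a b) as [H|H]; auto.
  destruct (classic (a = b)); auto. right; right; split; auto. Qed.

Lemma forces_hom {W W'} (R : modal -> W -> W -> Prop) (V : W -> nat -> Prop)
  (R' : modal -> W' -> W' -> Prop) (V' : W' -> nat -> Prop) (f : W -> W') :
  (forall x q, V x q -> V' (f x) q) ->
  forall A, (forall a, occ A a -> forall x y, R a x y -> R' a (f x) (f y)) ->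
  forall x, forces R V x A -> forces R' V' (f x) A.
Proof.
  intros HV A; induction A; simpl; intros HR x Hx; auto.
  - destruct Hx; split; [apply IHA1|apply IHA2]; auto.
  - destruct Hx as [y [Hy Hf]]; exists (f y); split; auto.
Qed.

Lemma sound {W} (R : modal -> W -> W -> Prop) (V : W -> nat -> Prop) rc
  (Hcomp : forall a b x y z, R a x y -> R b y z -> R (mmin a b) x z)
  (Heucl : forall a b x y z, mlt b a -> R a x y -> R b x z -> R b y z)
  (Hmon : rc = true -> forall a b x y, mlt b a -> R a x y -> R b x y) A B :
  prov rc A B -> forall x, forces R V x A -> forces R V x B.
Proof.
  induction 1; simpl; intros x0 Hx; try tauto; eauto.
  - destruct Hx as [y [Hy Hf]]; exists y; auto.
  - destruct Hx as [y [Hy [z [Hz Hf]]]]; exists z; split; auto.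
    rewrite <- (mmin_id a); eauto.
  - destruct Hx as [y [Hy [z [Hz Hf]]]]; exists z; split; auto.
    rewrite <- (mmin_l a b H); eauto.
  - destruct Hx as [y [Hy [z [Hz Hf]]]]; exists z; split; auto.
    rewrite <- (mmin_r b a H); eauto.
  - destruct Hx as [[y [Hy HA]] [z [Hz HB]]]; exists y; split; auto.
    split; auto; exists z; split; eauto.
  - destruct Hx as [y [Hy Hf]]; exists y; eauto.
Qed.

Lemma tedge_occ A : forall a x y, tedge A a x y -> occ A a.
Proof.
  induction A; simpl; intros m x y H; try contradiction.
  - destruct H as [[x' [y' [_ [_ H]]]]|[x' [y' [_ [_ H]]]]]; eauto.
  - destruct H as [[_ [_ ->]]|[x' [y' [_ [_ H]]]]]; eauto.
Qed.

Lemma tree_forces A : forces (tedge A) (tval A) None A.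
Proof.
  induction A; simpl; auto.
  - split.
    + refine (forces_hom (tedge A1) (tval A1) (tedge (FAnd A1 A2)) (tval (FAnd A1 A2))
        (embL A1 A2) _ A1 _ None IHA1).
      * intros [s|] q Hq; simpl; auto.
      * intros a _ x y H; left; exists x, y; auto.
    + refine (forces_hom (tedge A2) (tval A2) (tedge (FAnd A1 A2)) (tval (FAnd A1 A2))
        (embR A1 A2) _ A2 _ None IHA2).
      * intros [s|] q Hq; simpl; auto.
      * intros a _ x y H; right; exists x, y; auto.
  - exists (Some None); split; [left; auto|].
    refine (forces_hom (tedge A) (tval A) (tedge (FDia a A)) (tval (FDia a A))
        (fun x : node A => (Some x : node (FDia a A))) _ A _ None IHA).
    + intros x q Hq; exact Hq.
    + intros b _ x y H; right; exists x, y; auto.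
Qed.

Lemma RJrel_S S A (HS : forall a x y, tedge A a x y -> S a) :
  forall a x y, RJrel S A a x y -> S a.
Proof.
  induction 1; eauto. destruct (mmin_cases a b) as [->| ->]; auto.
Qed.

Lemma RJ_sound A B : RJ_prov A B -> RJ_model_root_forces (occ A) A B.
Proof.
  intro H. unfold RJ_model_root_forces.
  assert (HS : forall a x y, RJrel (occ A) A a x y -> occ A a)
    by (apply RJrel_S; apply tedge_occ).
  refine (sound (RJrel (occ A) A) (tval A) false _ _ _ A B H None _).
  - intros a b x y z H1 H2; eapply rj_comp; [eapply HS; exact H1|eapply HS; exact H2|exact H1|exact H2].
  - intros a b x y z Hl H1 H2; eapply (rj_eucl _ _ a b x y z); eauto.
  - intros Hf; discriminate Hf.
  - refine (forces_hom (tedge A) (tval A) _ _ (fun x => x) _ A _ None (tree_forces A)); auto.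
    intros a _ x y Hxy; apply rj_base; auto.
Qed.

Inductive Qrel {W : Type} (S : modal -> Prop) (R : modal -> W -> W -> Prop) (g : modal)
  : W -> W -> Prop :=
| q_base t x y : S t -> mlt g t -> R t x y -> Qrel S R g x y
| q_trans x y z : Qrel S R g x y -> Qrel S R g y z -> Qrel S R g x z
| q_eucl x y z : Qrel S R g x y -> Qrel S R g x z -> Qrel S R g y z.

Definition rcS_frame {W : Type} (S : modal -> Prop) (R : modal -> W -> W -> Prop) :=
  (forall a x y, R a x y -> S a) /\
  (forall a b x y z, R a x y -> R b y z -> R (mmin a b) x z) /\
  (forall a b x y z, mlt b a -> R a x y -> R b x z -> R b y z) /\
  (forall a b x y, S b -> mlt b a -> R a x y -> R b x y).

Lemma Qmono {W} S (R : modal -> W -> W -> Prop) g g' x y :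
  Qrel S R g x y -> mlt g' g -> Qrel S R g' x y.
Proof.
  induction 1; intros Hg.
  - eapply q_base; eauto. eapply mlt_trans; eauto.
  - eapply q_trans; eauto.
  - eapply q_eucl; eauto.
Qed.

Lemma QE {W} S (R : modal -> W -> W -> Prop) (HF : rcS_frame S R) g x y :
  Qrel S R g x y -> forall b, S b -> mlt b g ->
  R b x y /\ (forall z, R b x z -> R b y z).
Proof.
  destruct HF as [H0 [Hc [He Hm]]].
  induction 1; intros b Sb Hb.
  - split.
    + apply (Hm t b x y Sb); [eapply mlt_trans; eauto | exact H2].
    + intros z Hz. apply (He t b x y z); [eapply mlt_trans; eauto | exact H2 | exact Hz].
  - destruct (IHQrel1 b Sb Hb) as [A1 B1]; destruct (IHQrel2 b Sb Hb) as [A2 B2].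
    split; auto. rewrite <- (mmin_id b); eauto.
  - destruct (IHQrel1 b Sb Hb) as [A1 B1]; destruct (IHQrel2 b Sb Hb) as [A2 B2].
    split; auto.
    intros w Hw. apply B2. rewrite <- (mmin_id b); eauto.
Qed.

Definition Rext {W} S (R : modal -> W -> W -> Prop) a x y :=
  (S a /\ R a x y) \/ (~ S a /\ Qrel S R a x y).

Lemma Rext_comp {W} S (R : modal -> W -> W -> Prop) (HF : rcS_frame S R) a b x y z :
  Rext S R a x y -> Rext S R b y z -> Rext S R (mmin a b) x z.
Proof.
  pose proof HF as HF'. destruct HF' as [H0 [Hc [He Hm]]].
  intros [[Sa H1]|[Sa H1]] [[Sb H2]|[Sb H2]].
  - left. split; [destruct (mmin_cases a b) as [-> | ->]; auto | eauto].
  - destruct (mlt_or_ge a b) as [Hab|Hab].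
    + rewrite mmin_r by (apply mlt_le; auto). left; split; auto.
      destruct (QE S R HF _ _ _ H2 a Sa Hab) as [K _].
      rewrite <- (mmin_id a); eauto.
    + assert (Hba : mlt b a) by (split; auto; intros ->; auto).
      rewrite mmin_l by auto. right; split; auto.
      eapply q_trans; eauto. eapply q_base; eauto.
  - destruct (mlt_or_ge b a) as [Hab|Hab].
    + rewrite mmin_l by (apply mlt_le; auto). left; split; auto.
      destruct (QE S R HF _ _ _ H1 b Sb Hab) as [K _].
      rewrite <- (mmin_id b); eauto.
    + assert (Hba : mlt a b) by (split; auto; intros ->; auto).
      rewrite mmin_r by auto. right; split; auto.
      eapply q_trans; eauto. eapply q_base; eauto.
  - destruct (mlt_trich a b) as [Hab|[<-|Hab]].
    + rewrite mmin_r by (apply mlt_le; auto). right; split; auto.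
      eapply q_trans; eauto. eapply Qmono; eauto.
    + rewrite mmin_id. right; split; auto. eapply q_trans; eauto.
    + rewrite mmin_l by (apply mlt_le; auto). right; split; auto.
      eapply q_trans; eauto. eapply Qmono; eauto.
Qed.

Lemma Rext_eucl {W} S (R : modal -> W -> W -> Prop) (HF : rcS_frame S R) a b x y z :
  mlt b a -> Rext S R a x y -> Rext S R b x z -> Rext S R b y z.
Proof.
  pose proof HF as HF'. destruct HF' as [H0 [Hc [He Hm]]].
  intros Hba [[Sa H1]|[Sa H1]] [[Sb H2]|[Sb H2]].
  - left; split; eauto.
  - right; split; auto. eapply q_eucl; eauto. eapply q_base; eauto.
  - left; split; auto. destruct (QE S R HF _ _ _ H1 b Sb Hba) as [_ K]; auto.
  - right; split; auto. eapply q_eucl; eauto. eapply Qmono; eauto.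
Qed.

Lemma Rext_mon {W} S (R : modal -> W -> W -> Prop) (HF : rcS_frame S R) a b x y :
  mlt b a -> Rext S R a x y -> Rext S R b x y.
Proof.
  pose proof HF as HF'. destruct HF' as [H0 [Hc [He Hm]]].
  intros Hba [[Sa H1]|[Sa H1]]; destruct (classic (S b)) as [Sb|Sb].
  - left; split; eauto.
  - right; split; auto. eapply q_base; eauto.
  - left; split; auto. destruct (QE S R HF _ _ _ H1 b Sb Hba) as [K _]; auto.
  - right; split; auto. eapply Qmono; eauto.
Qed.

Lemma RCrel_S S A (HS : forall a x y, tedge A a x y -> S a) :
  forall a x y, RCrel S A a x y -> S a.
Proof.
  induction 1; eauto. destruct (mmin_cases a b) as [->| ->]; auto.
Qed.

Lemma RC_sound A B :
  RC_prov A B -> RC_model_root_forces (fun a => occ A a \/ occ B a) A B.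
Proof.
  intro H. unfold RC_model_root_forces.
  set (S := fun a => occ A a \/ occ B a).
  assert (HS : forall a x y, RCrel S A a x y -> S a)
    by (apply RCrel_S; intros; left; eapply tedge_occ; eauto).
  assert (HF : rcS_frame S (RCrel S A)).
  { split; [exact HS|]. split; [|split].
    - intros a b x y z H1 H2; eapply rc_comp; eauto.
    - intros a b x y z Hl H1 H2; eapply (rc_eucl _ _ a b x y z); eauto.
    - intros a b x y Sb Hl H1; eapply (rc_mon _ _ a b x y); eauto. }
  assert (K : forces (Rext S (RCrel S A)) (tval A) None B).
  { refine (sound (Rext S (RCrel S A)) (tval A) true _ _ _ A B H None _).
    - intros; eapply Rext_comp; eauto.
    - intros; eapply Rext_eucl; eauto.
    - intros _ a b x y Hl H1; eapply Rext_mon; eauto.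
    - refine (forces_hom (tedge A) (tval A) _ _ (fun x => x) _ A _ None (tree_forces A)); auto.
      intros a Ha x y Hxy; left; split; [left; auto|apply rc_base; auto]. }
  refine (forces_hom _ (tval A) _ _ (fun x => x) _ B _ None K); auto.
  intros a Ha x y [[_ Hr]|[Sa _]]; auto. exfalso; apply Sa; right; auto.
Qed.

Fixpoint conj (l : list form) : form :=
  match l with [] => FTop | D :: l => FAnd D (conj l) end.

Definition Cl rc (X : form -> Prop) (C : form) : Prop :=
  exists l, Forall X l /\ prov rc (conj l) C.

Definition closed rc (G : form -> Prop) :=
  G FTop /\ (forall C D, G C -> prov rc C D -> G D) /\
  (forall C D, G C -> G D -> G (FAnd C D)).

Lemma conj_app rc l1 l2 :
  prov rc (conj (l1 ++ l2)) (conj l1) /\ prov rc (conj (l1 ++ l2)) (conj l2).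
Proof.
  induction l1 as [|D l1 IH]; simpl.
  - split; [apply pr_top | apply pr_refl].
  - destruct IH as [I1 I2]; split.
    + apply pr_andI; [apply pr_andl | eapply pr_cut; [apply pr_andr | exact I1]].
    + eapply pr_cut; [apply pr_andr | exact I2].
Qed.

Lemma Cl_closed rc X : closed rc (Cl rc X).
Proof.
  split; [|split].
  - exists []; split; [constructor|apply pr_refl].
  - intros C D [l [Hl Hp]] H; exists l; split; auto; eapply pr_cut; eauto.
  - intros C D [l1 [Hl1 Hp1]] [l2 [Hl2 Hp2]]; exists (l1 ++ l2); split.
    + apply Forall_app; auto.
    + destruct (conj_app rc l1 l2) as [I1 I2].
      apply pr_andI; [eapply pr_cut; [exact I1|exact Hp1] | eapply pr_cut; [exact I2|exact Hp2]].
Qed.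

Lemma Cl_in rc (X : form -> Prop) C : X C -> Cl rc X C.
Proof. intros H; exists [C]; split; auto; apply pr_andl. Qed.

Definition Rcan (rc : bool) a (G D : form -> Prop) :=
  (forall C, D C -> G (FDia a C)) /\
  (forall b w, mlt b a -> G (FDia b w) -> D (FDia b w)).

Lemma Rcan_comp rc a b G D T : closed rc G ->
  Rcan rc a G D -> Rcan rc b D T -> Rcan rc (mmin a b) G T.
Proof.
  intros [_ [GP _]] [D1 D2] [T1 T2]; split.
  - intros C HC. apply (GP (FDia a (FDia b C))); auto.
    destruct (mle_total a b) as [H|H].
    + rewrite mmin_r by exact H. apply pr_redr; exact H.
    + rewrite mmin_l by exact H. apply pr_redl; exact H.
  - intros c w Hc HG. apply T2; [eapply mlt_le_trans; [exact Hc|apply mmin_lb2]|].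
    apply D2; [eapply mlt_le_trans; [exact Hc|apply mmin_lb1]|exact HG].
Qed.

Lemma Rcan_eucl rc a b G D T : closed rc G -> mlt b a ->
  Rcan rc a G D -> Rcan rc b G T -> Rcan rc b D T.
Proof.
  intros [_ [GP _]] Hba [D1 D2] [T1 T2]; split.
  - intros C HC. apply D2; auto.
  - intros c w Hc HD. apply T2; auto.
    apply (GP (FDia a (FDia c w))); auto.
    apply pr_redl. apply mlt_le. eapply mlt_trans; eauto.
Qed.

Lemma Rcan_mon a b G D : closed true G -> mlt b a ->
  Rcan true a G D -> Rcan true b G D.
Proof.
  intros [_ [GP _]] Hba [D1 D2]; split.
  - intros C HC. apply (GP (FDia a C)); auto. apply pr_mon; auto.
  - intros c w Hc HG. apply D2; auto. eapply mlt_trans; eauto.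
Qed.

Definition Next rc a (G : form -> Prop) B : form -> Prop :=
  Cl rc (fun C => C = B \/ exists b w, C = FDia b w /\ mlt b a /\ G (FDia b w)).

Lemma Rcan_next rc a G B : closed rc G -> G (FDia a B) -> Rcan rc a G (Next rc a G B).
Proof.
  intros HG HB. pose proof HG as [_ [GP GA]]. split.
  - intros C [l [Hl Hp]].
    assert (K : G (FDia a (FAnd B (conj l)))).
    { clear Hp. induction Hl as [|D l HD Hl IH]; simpl.
      - apply (GP _ _ HB). apply pr_mono. apply pr_andI; [apply pr_refl|apply pr_top].
      - destruct HD as [->|[b [w [-> [Hb Hw]]]]].
        + apply (GP _ _ IH). apply pr_mono.
          apply pr_andI; [apply pr_andl|apply pr_refl].
        + apply (GP _ _ (GA _ _ IH Hw)).
          eapply pr_cut; [apply pr_poly; exact Hb|]. apply pr_mono.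
          apply pr_andI; [eapply pr_cut; [apply pr_andl|apply pr_andl]|].
          apply pr_andI; [apply pr_andr|eapply pr_cut; [apply pr_andl|apply pr_andr]]. }
    apply (GP _ _ K). apply pr_mono. eapply pr_cut; [apply pr_andr|exact Hp].
  - intros b w Hb Hw. apply Cl_in. right; exists b, w; auto.
Qed.

Fixpoint Fth rc (A : form) (G : form -> Prop) : node A -> form -> Prop :=
  match A return node A -> form -> Prop with
  | FVar _ | FTop => fun _ => G
  | FAnd B C => fun x =>
      match x with
      | None => G
      | Some (inl s) => Fth rc B G (Some s)
      | Some (inr s) => Fth rc C G (Some s)
      end
  | FDia a B => fun x =>
      match x with
      | None => G
      | Some y => Fth rc B (Next rc a G B) y
      end
  end.

Lemma Fth_None rc A G : Fth rc A G None = G.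
Proof. destruct A; reflexivity. Qed.

Lemma Fth_embL rc B C G x : Fth rc (FAnd B C) G (embL B C x) = Fth rc B G x.
Proof. destruct x; simpl; [reflexivity|]. symmetry; apply Fth_None. Qed.
Lemma Fth_embR rc B C G x : Fth rc (FAnd B C) G (embR B C x) = Fth rc C G x.
Proof. destruct x; simpl; [reflexivity|]. symmetry; apply Fth_None. Qed.

Lemma Fth_props rc A : forall G, closed rc G -> G A ->
  (forall x, closed rc (Fth rc A G x)) /\
  (forall a x y, tedge A a x y -> Rcan rc a (Fth rc A G x) (Fth rc A G y)) /\
  (forall x q, tval A x q -> Fth rc A G x (FVar q)).
Proof.
  induction A as [p| |B IHB C IHC|b B IHB]; intros G HG HA.
  - split; [|split]; simpl; auto; [intros; contradiction|]. intros x q ->; auto.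
  - split; [|split]; simpl; auto; intros; contradiction.
  - pose proof HG as [_ [GP _]].
    destruct (IHB G HG (GP _ _ HA (pr_andl _ _ _))) as [B1 [B2 B3]].
    destruct (IHC G HG (GP _ _ HA (pr_andr _ _ _))) as [C1 [C2 C3]].
    split; [|split].
    + intros [[s|s]|]; simpl; auto.
    + intros a x y [[x' [y' [-> [-> H]]]]|[x' [y' [-> [-> H]]]]].
      * rewrite !Fth_embL; auto.
      * rewrite !Fth_embR; auto.
    + intros [[s|s]|] q; simpl; auto.
      intros [H|H]; [rewrite <- (Fth_None rc B G)|rewrite <- (Fth_None rc C G)]; auto.
  - assert (HN : closed rc (Next rc b G B)) by apply Cl_closed.
    assert (HNB : Next rc b G B B) by (apply Cl_in; left; auto).
    destruct (IHB _ HN HNB) as [B1 [B2 B3]].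
    split; [|split].
    + intros [y|]; simpl; auto.
    + intros a x y [[-> [-> ->]]|[x' [y' [-> [-> H]]]]]; simpl.
      * rewrite Fth_None. apply Rcan_next; auto.
      * auto.
    + intros [y|] q; simpl; auto; contradiction.
Qed.

Lemma truth {W} rc (R : modal -> W -> W -> Prop) (V : W -> nat -> Prop)
  (T : W -> form -> Prop) (HC : forall x, closed rc (T x))
  (HR : forall a x y, R a x y -> Rcan rc a (T x) (T y))
  (HV : forall x q, V x q -> T x (FVar q)) :
  forall B x, forces R V x B -> T x B.
Proof.
  induction B; simpl; intros x Hx; auto.
  - apply (HC x).
  - destruct Hx; apply (HC x); auto.
  - destruct Hx as [y [Hy Hf]]. apply (HR _ _ _ Hy); auto.
Qed.

Lemma Cl_root rc A B : Cl rc (fun C => C = A) B -> prov rc A B.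
Proof.
  intros [l [Hl Hp]]. eapply pr_cut; [|exact Hp].
  clear Hp; induction Hl as [|D l -> Hl IH]; simpl; [apply pr_top|].
  apply pr_andI; [apply pr_refl|exact IH].
Qed.

Lemma RJ_complete A B : RJ_model_root_forces (occ A) A B -> RJ_prov A B.
Proof.
  intros H. unfold RJ_prov. apply Cl_root.
  set (G := Cl false (fun C => C = A)).
  assert (HG : closed false G) by apply Cl_closed.
  assert (HA : G A) by (apply Cl_in; auto).
  destruct (Fth_props false A G HG HA) as [P1 [P2 P3]].
  rewrite <- (Fth_None false A G).
  refine (truth false (RJrel (occ A) A) (tval A) (Fth false A G) P1 _ P3 B None H).
  induction 1.
  - auto.
  - eapply Rcan_comp; eauto.
  - eapply (Rcan_eucl false a b (Fth false A G x)); eauto.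
Qed.

Lemma RC_complete S A B : RC_model_root_forces S A B -> RC_prov A B.
Proof.
  intros H. unfold RC_prov. apply Cl_root.
  set (G := Cl true (fun C => C = A)).
  assert (HG : closed true G) by apply Cl_closed.
  assert (HA : G A) by (apply Cl_in; auto).
  destruct (Fth_props true A G HG HA) as [P1 [P2 P3]].
  rewrite <- (Fth_None true A G).
  refine (truth true (RCrel S A) (tval A) (Fth true A G) P1 _ P3 B None H).
  induction 1.
  - auto.
  - eapply Rcan_comp; eauto.
  - eapply (Rcan_eucl true a b (Fth true A G x)); eauto.
  - eapply Rcan_mon; eauto.
Qed.

Theorem theorem5p2 :
  forall A B : form,
    (RJ_prov A B <-> RJ_model_root_forces (occ A) A B) /\
    (RC_prov A B <-> RC_model_root_forces (fun a => occ A a \/ occ B a) A B).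
Proof.
  intros A B; split; split.
  - apply RJ_sound.
  - apply RJ_complete.
  - apply RC_sound.
  - apply RC_complete.
Qed.
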